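(* Let $\mathbb{C}$ be a category of interest and $A\in\mathbb{C}$. Consider the category whose objects are split extensions $0\to A\to C\to C'\to 0$ in $\mathbb{C}$ (with fixed kernel $A$ and a chosen section) and whose morphisms are triples $(1_A,\gamma,\gamma')$ of morphisms in $\mathbb{C}$ making the evident diagrams commute, including compatibility with the sections. Let $E_A:0\to A\to A\ltimes A\to A\to 0$ be the split extension corresponding to the action of $A$ on itself by conjugation ($a\cdot a'=a+a'-a$, $a*a'=a*a'$ for $*\in\Omega_2'$). If $E_t:0\to A\to C\to B\to 0$ is a terminal object of this category, then for the unique morphism $(1_A,\gamma,\beta):E_A\to E_t$, the map $\beta:A\to B$, together with the derived action of $B$ on $A$ induced by $E_t$, is a crossed module in $\mathbb{C}$ which is an actor of $A$.
   Context: Category of interest. A category of groups with operations is a variety of universal algebras with a set of operations $\Omega=\Omega_0\cup\Omega_1\cup\Omega_2$ ($\Omega_i$ = set of $i$-ary operations) and a set of identities $\mathbb{E}$ such that: $\mathbb{E}$ contains the group laws; the group operations, written additively $0,-,+$ (addition not necessarily commutative), lie in $\Omega_0,\Omega_1,\Omega_2$ respectively, and $\Omega_0=\{0\}$; putting $\Omega_2'=\Omega_2\setminus\{+\}$ and $\Omega_1'=\Omega_1\setminus\{-\}$, whenever $*\in\Omega_2'$ also $*^\circ\in\Omega_2'$, where $x*^\circ y=y*x$; $\mathbb{E}$ contains $x*(y+z)=x*y+x*z$ for each $*\in\Omega_2'$, and $\omega(x+y)=\omega(x)+\omega(y)$, $\omega(x)*y=\omega(x*y)$ for each $\omega\in\Omega_1'$,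 $*\in\Omega_2'$. A category of interest $\mathbb{C}=(\Omega,\mathbb{E})$ is such a variety which also satisfies: (Axiom 1) $x_1+(x_2*x_3)=(x_2*x_3)+x_1$ for each $*\in\Omega_2'$; (Axiom 2) for each ordered pair $( *,\bar* )\in\Omega_2'\times\Omega_2'$ there is a word $W$ with $(x_1*x_2)\bar*x_3=W\big(x_1(x_2x_3),x_1(x_3x_2),(x_2x_3)x_1,(x_3x_2)x_1,x_2(x_1x_3),x_2(x_3x_1),(x_1x_3)x_2,(x_3x_1)x_2\big)$, each juxtaposition standing for some operation in $\Omega_2'$. Actions. For objects $A,B$ of $\mathbb{C}$, a split extension $0\to A\to E\xrightarrow{p}B\to 0$ in $\mathbb{C}$ ($p$ surjective with kernel $A$, and a morphism $s$ with $ps=1_B$) induces actions $b\cdot a=s(b)+a-s(b)$ and $b*a=s(b)*a$ ($*\in\Omega_2'$); these are the derived actions of $B$ on $A$ in $\mathbb{C}$ (one writes $a*b:=b*^\circ a$). Given such actions, $B\ltimes A$ is the algebra on $B\times A$ with $(b',a')+(b,a)=(b'+b,a'+b'\cdot a)$, $(b',a')*(b,a)=(b'*b,a'*a+a'*b+b'*a)$. Crossed modules and actors. A crossed module in $\mathbb{C}$ is a morphism $\partial:C_1\to C_0$ in $\mathbb{C}$ together with a derived action of $C_0$ on $C_1$ in $\mathbb{C}$ such that for all $r\in C_0$, $c,c'\in C_1$, $*\in\Omega_2'$: $\partial(r\cdot c)=r+\partial(c)-r$; $\partial(c)\cdot c'=c+c'-c$; $\partial(c)*c'=c*c'$; $\partial(r*c)=r*\partial(c)$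 and $\partial(c*r)=\partial(c)*r$. For $A\in\mathbb{C}$, an actor of $A$ is a crossed module $\partial:A\to\mathrm{Actor}(A)$ in $\mathbb{C}$ such that for every $C\in\mathbb{C}$ and every derived action of $C$ on $A$ in $\mathbb{C}$ there is a unique morphism $\varphi:C\to\mathrm{Actor}(A)$ in $\mathbb{C}$ with $c\cdot a=\varphi(c)\cdot a$ and $c*a=\varphi(c)*a$ for all $c\in C$, $a\in A$, $*\in\Omega_2'$. *)

(* Defs.v *)
Set Implicit Arguments.
Unset Strict Implicit.

(* Signatures of groups with operations:                               *)
(*   Omega0 = {0}, Omega1 = {-} + O1, Omega2 = {+} + O2,              *)
(*   with circ : O2 -> O2 the map * |-> *^o.                            *)
Record Sig := { O1 : Type; O2 : Type; circ : O2 -> O2 }.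

Record alg (S : Sig) := {
  car :> Type;
  zero : car;
  add : car -> car -> car;
  opp : car -> car;
  un : O1 S -> car -> car;
  bin : O2 S -> car -> car -> car }.

Arguments zero {S} a.
Arguments add {S} {a}.
Arguments opp {S} {a}.
Arguments un {S} {a}.
Arguments bin {S} {a}.

Inductive term (S : Sig) : Type :=
| tvar : nat -> term S
| tzero : term S
| tadd : term S -> term S -> term S
| topp : term S -> term S
| tun : O1 S -> term S -> term S
| tbin : O2 S -> term S -> term S -> term S.

Arguments tvar {S}.
Arguments tzero {S}.

Fixpoint eval (S : Sig) (X : alg S) (v : nat -> car X) (t : term S) : car X :=
  match t with
  | tvar n => v n
  | tzero => zero X
  | tadd t u => add (eval v t) (eval v u)
  | topp t => opp (eval v t)
  | tun o t => un o (eval v t)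
  | tbin o t u => bin o (eval v t) (eval v u)
  end.

Definition identity (S : Sig) : Type := (term S * term S)%type.

Definition satisfies (S : Sig) (X : alg S) (e : identity S) : Prop :=
  forall v : nat -> car X, eval v (fst e) = eval v (snd e).

Definition in_var (S : Sig) (E : identity S -> Prop) (X : alg S) : Prop :=
  forall e, E e -> satisfies X e.

Definition valid (S : Sig) (E : identity S -> Prop) (e : identity S) : Prop :=
  forall X : alg S, in_var E X -> satisfies X e.

Definition x0 {S} : term S := tvar 0.
Definition x1 {S} : term S := tvar 1.
Definition x2 {S} : term S := tvar 2.

Definition group_with_ops (S : Sig) (E : identity S -> Prop) : Prop :=
  E (tadd (tadd x0 x1) x2, tadd x0 (tadd x1 x2)) /\
  E (tadd tzero x0, x0) /\
  E (tadd x0 tzero, x0) /\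
  E (tadd (topp x0) x0, tzero) /\
  E (tadd x0 (topp x0), tzero) /\
  (forall o : O2 S, E (tbin (circ o) x0 x1, tbin o x1 x0)) /\
  (forall o : O2 S, E (tbin o x0 (tadd x1 x2), tadd (tbin o x0 x1) (tbin o x0 x2))) /\
  (forall w : O1 S, E (tun w (tadd x0 x1), tadd (tun w x0) (tun w x1))) /\
  (forall (w : O1 S) (o : O2 S), E (tbin o (tun w x0) x1, tun w (tbin o x0 x1))).

Inductive gword : Type :=
| gvar : nat -> gword
| gzero : gword
| gadd : gword -> gword -> gword
| gopp : gword -> gword.

Fixpoint gsubst (S : Sig) (W : gword) (f : nat -> term S) : term S :=
  match W with
  | gvar n => f n
  | gzero => tzero
  | gadd a b => tadd (gsubst a f) (gsubst b f)
  | gopp a => topp (gsubst a f)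
  end.

(* The eight arguments of the word W in Axiom 2; ops k = (inner, outer)
   operations used in the k-th argument. Variables x1,x2,x3 are tvar 0,1,2. *)
Definition ax2_arg (S : Sig) (ops : nat -> (O2 S * O2 S)) (k : nat) : term S :=
  let i := fst (ops k) in let o := snd (ops k) in
  match k with
  | 0 => tbin o x0 (tbin i x1 x2)
  | 1 => tbin o x0 (tbin i x2 x1)
  | 2 => tbin o (tbin i x1 x2) x0
  | 3 => tbin o (tbin i x2 x1) x0
  | 4 => tbin o x1 (tbin i x0 x2)
  | 5 => tbin o x1 (tbin i x2 x0)
  | 6 => tbin o (tbin i x0 x2) x1
  | 7 => tbin o (tbin i x2 x0) x1
  | _ => tzero
  end.

Definition cat_of_interest (S : Sig) (E : identity S -> Prop) : Prop :=
  group_with_ops E /\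
  (forall o : O2 S, valid E (tadd x0 (tbin o x1 x2), tadd (tbin o x1 x2) x0)) /\
  (forall o o' : O2 S, exists (W : gword) (ops : nat -> (O2 S * O2 S)),
      valid E (tbin o' (tbin o x0 x1) x2, gsubst W (ax2_arg ops))).

Definition is_hom (S : Sig) (X Y : alg S) (f : car X -> car Y) : Prop :=
  f (zero X) = zero Y /\
  (forall x y, f (add x y) = add (f x) (f y)) /\
  (forall x, f (opp x) = opp (f x)) /\
  (forall w x, f (un w x) = un w (f x)) /\
  (forall o x y, f (bin o x y) = bin o (f x) (f y)).

Record split_ext (S : Sig) (A B : alg S) := {
  se_mid : alg S;
  se_i : car A -> car se_mid;
  se_p : car se_mid -> car B;
  se_s : car B -> car se_mid }.

Arguments se_mid {S A B} s.
Arguments se_i {S A B} s _.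
Arguments se_p {S A B} s _.
Arguments se_s {S A B} s _.

Definition is_split_ext (S : Sig) (E : identity S -> Prop) (A B : alg S)
    (X : split_ext A B) : Prop :=
  in_var E A /\ in_var E (se_mid X) /\ in_var E B /\
  is_hom (se_i X) /\ is_hom (se_p X) /\ is_hom (se_s X) /\
  (forall a a', se_i X a = se_i X a' -> a = a') /\
  (forall m, se_p X m = zero B <-> exists a, se_i X a = m) /\
  (forall m, exists m', se_p X m' = m) /\
  (forall b, se_p X (se_s X b) = b).

Definition induces (S : Sig) (A B : alg S) (X : split_ext A B)
    (dot : car B -> car A -> car A) (op : O2 S -> car B -> car A -> car A) : Prop :=
  (forall b a, se_i X (dot b a) =
      add (add (se_s X b) (se_i X a)) (opp (se_s X b))) /\
  (forall o b a, se_i X (op o b a) = bin o (se_s X b) (se_i X a)).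

Definition derived_action (S : Sig) (E : identity S -> Prop) (B A : alg S)
    (dot : car B -> car A -> car A) (op : O2 S -> car B -> car A -> car A) : Prop :=
  exists X : split_ext A B, is_split_ext E X /\ induces X dot op.

Definition split_ext_mor (S : Sig) (A B B' : alg S)
    (X : split_ext A B) (Y : split_ext A B')
    (g : car (se_mid X) -> car (se_mid Y)) (g' : car B -> car B') : Prop :=
  is_hom g /\ is_hom g' /\
  (forall a, g (se_i X a) = se_i Y a) /\
  (forall m, se_p Y (g m) = g' (se_p X m)) /\
  (forall b, g (se_s X b) = se_s Y (g' b)).

Arguments split_ext_mor {S A B B'} X Y g g'.

Definition terminal_split_ext (S : Sig) (E : identity S -> Prop) (A B : alg S)
    (T : split_ext A B) : Prop :=
  is_split_ext E T /\
  forall (B' : alg S) (X : split_ext A B'), is_split_ext E X ->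
    exists (g : car (se_mid X) -> car (se_mid T)) (g' : car B' -> car B),
      split_ext_mor X T g g' /\
      forall h h', split_ext_mor X T h h' ->
        (forall m, h m = g m) /\ (forall b, h' b = g' b).

(*   (b',a') * (b,a) = (b'*b, a'*a + a'*b + b'*a), a'*b := b *^o a'     *)
Definition semidirect (S : Sig) (B A : alg S)
    (dot : car B -> car A -> car A) (op : O2 S -> car B -> car A -> car A) : alg S :=
  {| car := (car B * car A)%type;
     zero := (zero B, zero A);
     add := fun x y => (add (fst x) (fst y), add (snd x) (dot (fst x) (snd y)));
     opp := fun x => (opp (fst x), dot (opp (fst x)) (opp (snd x)));
     un := fun w x => (un w (fst x), un w (snd x));
     bin := fun o x y =>
       (bin o (fst x) (fst y),
        add (add (bin o (snd x) (snd y)) (op (circ o) (fst y) (snd x)))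
            (op o (fst x) (snd y))) |}.

Definition conj_dot (S : Sig) (A : alg S) (a a' : car A) : car A :=
  add (add a a') (opp a).
Definition conj_op (S : Sig) (A : alg S) (o : O2 S) (a a' : car A) : car A :=
  bin o a a'.

Definition EA (S : Sig) (A : alg S) : split_ext A A :=
  {| se_mid := semidirect (@conj_dot S A) (@conj_op S A);
     se_i := fun a => (zero A, a);
     se_p := fun x => fst x;
     se_s := fun b => (b, zero A) |}.

Definition crossed_module (S : Sig) (E : identity S -> Prop) (C1 C0 : alg S)
    (d : car C1 -> car C0)
    (dot : car C0 -> car C1 -> car C1) (op : O2 S -> car C0 -> car C1 -> car C1) : Prop :=
  in_var E C1 /\ in_var E C0 /\ is_hom d /\
  derived_action E dot op /\
  (forall r c, d (dot r c) = add (add r (d c)) (opp r)) /\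
  (forall c c', dot (d c) c' = add (add c c') (opp c)) /\
  (forall o c c', op o (d c) c' = bin o c c') /\
  (forall o r c, d (op o r c) = bin o r (d c)) /\
  (* c * r := r *^o c *)
  (forall o r c, d (op (circ o) r c) = bin o (d c) r).

Definition is_actor (S : Sig) (E : identity S -> Prop) (A Act : alg S)
    (d : car A -> car Act)
    (dot : car Act -> car A -> car A) (op : O2 S -> car Act -> car A -> car A) : Prop :=
  crossed_module E d dot op /\
  forall (C : alg S), in_var E C ->
  forall (dotC : car C -> car A -> car A) (opC : O2 S -> car C -> car A -> car A),
    derived_action E dotC opC ->
    exists phi : car C -> car Act,
      (is_hom phi /\
       (forall c a, dotC c a = dot (phi c) a) /\
       (forall o c a, opC o c a = op o (phi c) a)) /\
      forall psi : car C -> car Act,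
        (is_hom psi /\
         (forall c a, dotC c a = dot (psi c) a) /\
         (forall o c a, opC o c a = op o (psi c) a)) ->
        forall c, psi c = phi c.

(* Main.v *)
Require Import Defs.
From Stdlib Require Import ProofIrrelevance List.
Set Implicit Arguments.
Unset Strict Implicit.


Record laws (S : Sig) (X : alg S) : Prop := {
 L_assoc : forall a b c : car X, add (add a b) c = add a (add b c);
 L_0l : forall a : car X, add (zero X) a = a;
 L_0r : forall a : car X, add a (zero X) = a;
 L_Nl : forall a : car X, add (opp a) a = zero X;
 L_Nr : forall a : car X, add a (opp a) = zero X;
 L_circ : forall o (a b : car X), bin (circ o) a b = bin o b a;
 L_distr : forall o (a b c : car X), bin o a (add b c) = add (bin o a b) (bin o a c);
 L_und : forall w (a b : car X), un w (add a b) = add (un w a) (un w b);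
 L_unbin : forall w o (a b : car X), bin o (un w a) b = un w (bin o a b);
 L_central : forall o (a b c : car X), add a (bin o b c) = add (bin o b c) a;
 L_ax2 : forall o o', exists (W : gword) (ops : nat -> (O2 S * O2 S)),
    forall v : nat -> car X, eval v (tbin o' (tbin o x0 x1) x2) = eval v (gsubst W (ax2_arg ops)) }.

Definition v3 (S : Sig) (X : alg S) (a b c : car X) : nat -> car X :=
  fun n => match n with 0 => a | 1 => b | _ => c end.

Lemma laws_of (S : Sig) (E : identity S -> Prop) (X : alg S) :
  cat_of_interest E -> in_var E X -> laws X.
Proof.
  intros [[H1 [H2 [H3 [H4 [H5 [H6 [H7 [H8 H9]]]]]]]] [Ha1 Ha2]] HX.
  constructor.
  - intros a b c. exact (HX _ H1 (v3 a b c)).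
  - intros a. exact (HX _ H2 (v3 a a a)).
  - intros a. exact (HX _ H3 (v3 a a a)).
  - intros a. exact (HX _ H4 (v3 a a a)).
  - intros a. exact (HX _ H5 (v3 a a a)).
  - intros o a b. exact (HX _ (H6 o) (v3 a b b)).
  - intros o a b c. exact (HX _ (H7 o) (v3 a b c)).
  - intros w a b. exact (HX _ (H8 w) (v3 a b b)).
  - intros w o a b. exact (HX _ (H9 w o) (v3 a b b)).
  - intros o a b c. exact (Ha1 o X HX (v3 a b c)).
  - intros o o'. destruct (Ha2 o o') as [W [ops HW]]. exists W, ops.
    intros v. exact (HW X HX v).
Qed.


Lemma addKl S (X : alg S) (H : laws X) (a b : car X) : add (opp a) (add a b) = b.
Proof. rewrite <- (L_assoc H), (L_Nl H), (L_0l H). reflexivity. Qed.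
Lemma addKr S (X : alg S) (H : laws X) (a b : car X) : add a (add (opp a) b) = b.
Proof. rewrite <- (L_assoc H), (L_Nr H), (L_0l H). reflexivity. Qed.
Lemma addNK S (X : alg S) (H : laws X) (a b : car X) : add (add b a) (opp a) = b.
Proof. rewrite (L_assoc H), (L_Nr H), (L_0r H). reflexivity. Qed.
Lemma addKN S (X : alg S) (H : laws X) (a b : car X) : add (add b (opp a)) a = b.
Proof. rewrite (L_assoc H), (L_Nl H), (L_0r H). reflexivity. Qed.
Lemma add_cancel_l S (X : alg S) (H : laws X) (a b c : car X) : add a b = add a c -> b = c.
Proof. intro E. rewrite <- (addKl H a b), E, (addKl H). reflexivity. Qed.
Lemma add_cancel_r S (X : alg S) (H : laws X) (a b c : car X) : add b a = add c a -> b = c.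
Proof. intro E. rewrite <- (addNK H a b), E, (addNK H). reflexivity. Qed.
Lemma opp_uniq S (X : alg S) (H : laws X) (a b : car X) : add a b = zero X -> b = opp a.
Proof. intro E. apply (add_cancel_l (a:=a) H). rewrite E, (L_Nr H). reflexivity. Qed.
Lemma oppK S (X : alg S) (H : laws X) (a : car X) : opp (opp a) = a.
Proof. symmetry. apply opp_uniq; [exact H|]. apply (L_Nl H). Qed.
Lemma oppD S (X : alg S) (H : laws X) (a b : car X) : opp (add a b) = add (opp b) (opp a).
Proof. symmetry. apply opp_uniq; [exact H|]. rewrite (L_assoc H), (addKr H), (L_Nr H). reflexivity. Qed.
Lemma opp0 S (X : alg S) (H : laws X) : opp (zero X) = zero X.
Proof. symmetry. apply opp_uniq; [exact H|]. apply (L_0l H). Qed.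
Lemma idem0 S (X : alg S) (H : laws X) (a : car X) : add a a = a -> a = zero X.
Proof. intro E. apply (add_cancel_l (a:=a) H). rewrite E, (L_0r H). reflexivity. Qed.
Lemma un0 S (X : alg S) (H : laws X) w : un w (zero X) = zero X.
Proof. apply (idem0 H). rewrite <- (L_und H), (L_0l H). reflexivity. Qed.
Lemma unN S (X : alg S) (H : laws X) w (a : car X) : un w (opp a) = opp (un w a).
Proof. apply opp_uniq; [exact H|]. rewrite <- (L_und H), (L_Nr H), (un0 H). reflexivity. Qed.
Lemma bin0r S (X : alg S) (H : laws X) o (a : car X) : bin o a (zero X) = zero X.
Proof. apply (idem0 H). rewrite <- (L_distr H), (L_0l H). reflexivity. Qed.
Lemma binDl S (X : alg S) (H : laws X) o (a b c : car X) : bin o (add a b) c = add (bin o a c) (bin o b c).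
Proof. rewrite <- (L_circ H o c (add a b)), <- (L_circ H o c a), <- (L_circ H o c b). apply (L_distr H). Qed.
Lemma bin0l S (X : alg S) (H : laws X) o (a : car X) : bin o (zero X) a = zero X.
Proof. rewrite <- (L_circ H o a (zero X)). apply (bin0r H). Qed.
Lemma binNr S (X : alg S) (H : laws X) o (a b : car X) : bin o a (opp b) = opp (bin o a b).
Proof. apply opp_uniq; [exact H|]. rewrite <- (L_distr H), (L_Nr H), (bin0r H). reflexivity. Qed.
Lemma binNl S (X : alg S) (H : laws X) o (a b : car X) : bin o (opp a) b = opp (bin o a b).
Proof. rewrite <- (L_circ H o b (opp a)), <- (L_circ H o b a). apply (binNr H). Qed.
Lemma conj_central S (X : alg S) (H : laws X) o (a b c : car X) :
  add (add a (bin o b c)) (opp a) = bin o b c.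
Proof. rewrite (L_central H), (L_assoc H), (L_Nr H), (L_0r H). reflexivity. Qed.
Lemma oppN_central S (X : alg S) (H : laws X) o (a b c : car X) :
  add (opp (bin o b c)) a = add a (opp (bin o b c)).
Proof. rewrite <- (binNr H). symmetry. apply (L_central H). Qed.



Lemma hom0 S (X Y : alg S) (f : car X -> car Y) : is_hom f -> f (zero X) = zero Y.
Proof. intros [h _]; exact h. Qed.
Lemma homD S (X Y : alg S) (f : car X -> car Y) : is_hom f -> forall x y, f (add x y) = add (f x) (f y).
Proof. intros [_ [h _]]; exact h. Qed.
Lemma homN S (X Y : alg S) (f : car X -> car Y) : is_hom f -> forall x, f (opp x) = opp (f x).
Proof. intros [_ [_ [h _]]]; exact h. Qed.
Lemma homU S (X Y : alg S) (f : car X -> car Y) : is_hom f -> forall w x, f (un w x) = un w (f x).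
Proof. intros [_ [_ [_ [h _]]]]; exact h. Qed.
Lemma homB S (X Y : alg S) (f : car X -> car Y) : is_hom f -> forall o x y, f (bin o x y) = bin o (f x) (f y).
Proof. intros [_ [_ [_ [_ h]]]]; exact h. Qed.

Definition prod_alg S (X Y : alg S) : alg S :=
  {| car := (car X * car Y)%type;
     zero := (zero X, zero Y);
     add := fun p q => (add (fst p) (fst q), add (snd p) (snd q));
     opp := fun p => (opp (fst p), opp (snd p));
     un := fun w p => (un w (fst p), un w (snd p));
     bin := fun o p q => (bin o (fst p) (fst q), bin o (snd p) (snd q)) |}.

Lemma eval_prod S (X Y : alg S) (v : nat -> car (prod_alg X Y)) t :
  eval v t = (eval (fun n => fst (v n)) t, eval (fun n => snd (v n)) t).
Proof.
  induction t; cbn; try rewrite IHt; try rewrite IHt1, IHt2; cbn; try reflexivity.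
  destruct (v n); reflexivity.
Qed.

Lemma in_var_prod S (E : identity S -> Prop) (X Y : alg S) :
  in_var E X -> in_var E Y -> in_var E (prod_alg X Y).
Proof.
  intros HX HY e He v. rewrite !eval_prod. f_equal; [apply HX | apply HY]; exact He.
Qed.

Record closed S (X : alg S) (P : car X -> Prop) : Prop := {
  c0 : P (zero X);
  cD : forall x y, P x -> P y -> P (add x y);
  cN : forall x, P x -> P (opp x);
  cU : forall w x, P x -> P (un w x);
  cB : forall o x y, P x -> P y -> P (bin o x y) }.

Definition sub_alg S (X : alg S) (P : car X -> Prop) (H : closed P) : alg S :=
  {| car := {x : car X | P x};
     zero := exist _ (zero X) (c0 H);
     add := fun x y => exist _ (add (proj1_sig x) (proj1_sig y)) (cD H (proj2_sig x) (proj2_sig y));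
     opp := fun x => exist _ (opp (proj1_sig x)) (cN H (proj2_sig x));
     un := fun w x => exist _ (un w (proj1_sig x)) (cU H w (proj2_sig x));
     bin := fun o x y => exist _ (bin o (proj1_sig x) (proj1_sig y)) (cB H o (proj2_sig x) (proj2_sig y)) |}.

Lemma sig_eq (T : Type) (P : T -> Prop) (x y : {t | P t}) : proj1_sig x = proj1_sig y -> x = y.
Proof.
  destruct x as [x px], y as [y py]; cbn; intros ->. f_equal. apply proof_irrelevance.
Qed.

Lemma eval_sub S (X : alg S) (P : car X -> Prop) (H : closed P) (v : nat -> car (sub_alg H)) t :
  proj1_sig (eval v t) = eval (fun n => proj1_sig (v n)) t.
Proof.
  induction t; cbn; try rewrite IHt; try rewrite IHt1, IHt2; reflexivity.
Qed.

Lemma in_var_sub S (E : identity S -> Prop) (X : alg S) (P : car X -> Prop) (H : closed P) :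
  in_var E X -> in_var E (sub_alg H).
Proof.
  intros HX e He v. apply sig_eq. rewrite !eval_sub. apply HX; exact He.
Qed.

Fixpoint geval S (X : alg S) (f : nat -> car X) (W : gword) : car X :=
  match W with
  | gvar n => f n
  | gzero => zero X
  | gadd a b => add (geval f a) (geval f b)
  | gopp a => opp (geval f a)
  end.

Lemma eval_gsubst S (X : alg S) (v : nat -> car X) W (f : nat -> term S) :
  eval v (gsubst W f) = geval (fun n => eval v (f n)) W.
Proof. induction W; cbn; try rewrite IHW; try rewrite IHW1, IHW2; reflexivity. Qed.

Lemma geval_ext S (X : alg S) (f g : nat -> car X) W :
  (forall n, f n = g n) -> geval f W = geval g W.
Proof. intro h; induction W; cbn; try rewrite IHW; try rewrite IHW1, IHW2; auto. Qed.


Definition agree S (A M : alg S) (i : car A -> car M) (t t' : car M) : Prop :=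
  forall o a, bin o t (i a) = bin o t' (i a) /\ bin o (i a) t = bin o (i a) t'.
Definition stab S (A M : alg S) (i : car A -> car M) (t : car M) : Prop :=
  forall o a, (exists a', bin o t (i a) = i a') /\ (exists a', bin o (i a) t = i a').

Lemma G2 S (A M : alg S) (HM : laws M) (i : car A -> car M) (x x' y y' : car M) :
  agree i x x' -> agree i y y' -> stab i x' -> stab i y' ->
  forall o o' a, bin o' (bin o x y) (i a) = bin o' (bin o x' y') (i a).
Proof.
  intros Ax Ay Sx Sy o o' a.
  destruct (L_ax2 HM o o') as [W [ops HW]].
  pose proof (HW (v3 x y (i a))) as E1. pose proof (HW (v3 x' y' (i a))) as E2.
  cbn in E1, E2. rewrite E1, E2. rewrite !eval_gsubst. apply geval_ext.
  assert (h1 : forall t t' u u' p q, agree i t t' -> stab i t' -> agree i u u' ->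
     (bin p u (bin q t (i a)) = bin p u' (bin q t' (i a))
     /\ bin p u (bin q (i a) t) = bin p u' (bin q (i a) t'))
     /\ (bin p (bin q t (i a)) u = bin p (bin q t' (i a)) u'
     /\ bin p (bin q (i a) t) u = bin p (bin q (i a) t') u')).
  { intros t t' u u' p q At St Au.
    destruct (At q a) as [At1 At2]. destruct (St q a) as [[a1 Ea1] [a2 Ea2]].
    rewrite At1, At2, Ea1, Ea2.
    destruct (Au p a1) as [Au1 Au2]. destruct (Au p a2) as [Au3 Au4].
    repeat split; assumption. }
  intros [|[|[|[|[|[|[|[|k]]]]]]]]; cbn; try reflexivity;
  first [ apply (h1 _ _ _ _ _ _ Ay Sy Ax) | apply (h1 _ _ _ _ _ _ Ax Sx Ay) ].
Qed.


Record good S (A B : alg S) (X : split_ext A B) : Prop := {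
 gA : laws A; gM : laws (se_mid X); gB : laws B;
 gi : is_hom (se_i X); gp : is_hom (se_p X); gs : is_hom (se_s X);
 ginj : forall a a', se_i X a = se_i X a' -> a = a';
 gker : forall m, se_p X m = zero B -> exists a, se_i X a = m;
 gpi : forall a, se_p X (se_i X a) = zero B;
 gps : forall b, se_p X (se_s X b) = b }.

Lemma good_of S (E : identity S -> Prop) (A B : alg S) (X : split_ext A B) :
  cat_of_interest E -> is_split_ext E X -> good X.
Proof.
  intros HC [HA [HM [HB [Hi [Hp [Hs [Hinj [Hker [_ Hps]]]]]]]]].
  constructor; try assumption; try (apply (laws_of HC); assumption).
  - intros m; apply Hker.
  - intros a; apply Hker; exists a; reflexivity.
Qed.

Definition act_eq S (A B : alg S) (dot : car B -> car A -> car A) (op : O2 S -> car B -> car A -> car A)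
  (b b' : car B) : Prop :=
  (forall a, dot b a = dot b' a) /\ (forall o a, op o b a = op o b' a).

Ltac gn H := repeat rewrite (L_assoc H).

Lemma L_dot S (A B : alg S) (Et : split_ext A B) dot op (Hi : induces Et dot op) b a :
  se_i Et (dot b a) = add (add (se_s Et b) (se_i Et a)) (opp (se_s Et b)).
Proof. apply (proj1 Hi). Qed.
Lemma L_op S (A B : alg S) (Et : split_ext A B) dot op (Hi : induces Et dot op) o b a :
  se_i Et (op o b a) = bin o (se_s Et b) (se_i Et a).
Proof. apply (proj2 Hi). Qed.
Lemma i_bin_s S (A B : alg S) (Et : split_ext A B) (G : good Et) dot op (Hi : induces Et dot op) o b a :
  bin o (se_i Et a) (se_s Et b) = se_i Et (op (circ o) b a).
Proof. rewrite (L_op Hi), (L_circ (gM G)). reflexivity. Qed.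

Lemma dot0 S (A B : alg S) (Et : split_ext A B) (G : good Et) dot op (Hi : induces Et dot op) a :
  dot (zero B) a = a.
Proof.
  apply (ginj G). rewrite (L_dot Hi), (hom0 (gs G)), (opp0 (gM G)), (L_0l (gM G)), (L_0r (gM G)).
  reflexivity.
Qed.

Lemma dot_add S (A B : alg S) (Et : split_ext A B) (G : good Et) dot op (Hi : induces Et dot op) b c a :
  dot (add b c) a = dot b (dot c a).
Proof.
  apply (ginj G). rewrite !(L_dot Hi), (homD (gs G)), (oppD (gM G)). gn (gM G). reflexivity.
Qed.

Lemma op_add S (A B : alg S) (Et : split_ext A B) (G : good Et) dot op (Hi : induces Et dot op) o b c a :
  op o (add b c) a = add (op o b a) (op o c a).
Proof.
  apply (ginj G). rewrite (homD (gi G)), !(L_op Hi), (homD (gs G)), (binDl (gM G)). reflexivity.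
Qed.

Lemma op_opp S (A B : alg S) (Et : split_ext A B) (G : good Et) dot op (Hi : induces Et dot op) o b a :
  op o (opp b) a = opp (op o b a).
Proof.
  apply (ginj G). rewrite (homN (gi G)), !(L_op Hi), (homN (gs G)), (binNl (gM G)). reflexivity.
Qed.

Lemma dot_inv S (A B : alg S) (Et : split_ext A B) (G : good Et) dot op (Hi : induces Et dot op) b a :
  dot b (dot (opp b) a) = a /\ dot (opp b) (dot b a) = a.
Proof.
  rewrite <- !(dot_add G Hi), (L_Nr (gB G)), (L_Nl (gB G)), !(dot0 G Hi). split; reflexivity.
Qed.

Lemma dot_un S (A B : alg S) (Et : split_ext A B) (G : good Et) dot op (Hi : induces Et dot op) w b a :
  un w (dot b a) = dot (un w b) (un w a).
Proof.
  apply (ginj G). rewrite (homU (gi G)), !(L_dot Hi), !(L_und (gM G)), (unN (gM G)), (homU (gs G)), (homU (gi G)).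
  reflexivity.
Qed.

Lemma op_un S (A B : alg S) (Et : split_ext A B) (G : good Et) dot op (Hi : induces Et dot op) w o b a :
  un w (op o b a) = op o (un w b) a.
Proof.
  apply (ginj G). rewrite (homU (gi G)), !(L_op Hi), <- (L_unbin (gM G)), (homU (gs G)). reflexivity.
Qed.

Lemma dot_bin S (A B : alg S) (Et : split_ext A B) (G : good Et) dot op (Hi : induces Et dot op) o b c a :
  dot (bin o b c) a = a.
Proof.
  apply (ginj G). rewrite (L_dot Hi), (homB (gs G)), <- (L_central (gM G)), (addNK (gM G)).
  reflexivity.
Qed.



Lemma stab_s S (A B : alg S) (Et : split_ext A B) (G : good Et) dot op (Hi : induces Et dot op) b :
  stab (se_i Et) (se_s Et b).
Proof.
  intros o a. split.
  - exists (op o b a). symmetry. apply (L_op Hi).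
  - exists (op (circ o) b a). apply (i_bin_s G Hi).
Qed.

Lemma stab_i S (A B : alg S) (Et : split_ext A B) (G : good Et) c :
  stab (se_i Et) (se_i Et c).
Proof.
  intros o a. split.
  - exists (bin o c a). symmetry. apply (homB (gi G)).
  - exists (bin o a c). symmetry. apply (homB (gi G)).
Qed.

Lemma agree_s S (A B : alg S) (Et : split_ext A B) (G : good Et) dot op (Hi : induces Et dot op) b b' :
  act_eq dot op b b' -> agree (se_i Et) (se_s Et b) (se_s Et b').
Proof.
  intros [_ Ho] o a. rewrite <- !(L_op Hi), !(i_bin_s G Hi), !Ho. split; reflexivity.
Qed.

Lemma AE_refl S (A B : alg S) dot op (b : car B) : @act_eq S A B dot op b b.
Proof. split; reflexivity. Qed.

Lemma AE_add S (A B : alg S) (Et : split_ext A B) (G : good Et) dot op (Hi : induces Et dot op) b b' c c' :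
  act_eq dot op b b' -> act_eq dot op c c' -> act_eq dot op (add b c) (add b' c').
Proof.
  intros [H1 H2] [H3 H4]. split.
  - intros a. rewrite !(dot_add G Hi), H3, H1. reflexivity.
  - intros o a. rewrite !(op_add G Hi), H2, H4. reflexivity.
Qed.

Lemma AE_opp S (A B : alg S) (Et : split_ext A B) (G : good Et) dot op (Hi : induces Et dot op) b b' :
  act_eq dot op b b' -> act_eq dot op (opp b) (opp b').
Proof.
  intros [H1 H2]. split.
  - intros a. set (y := dot (opp b) a).
    assert (Ey : dot b y = a) by apply (proj1 (dot_inv G Hi b a)).
    rewrite H1 in Ey. rewrite <- Ey. rewrite (proj2 (dot_inv G Hi b' y)). reflexivity.
  - intros o a. rewrite !(op_opp G Hi), H2. reflexivity.
Qed.

Lemma AE_bin S (A B : alg S) (Et : split_ext A B) (G : good Et) dot op (Hi : induces Et dot op) o b b' c c' :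
  act_eq dot op b b' -> act_eq dot op c c' -> act_eq dot op (bin o b c) (bin o b' c').
Proof.
  intros H1 H2. split.
  - intros a. rewrite !(dot_bin G Hi). reflexivity.
  - intros o' a. apply (ginj G). rewrite !(L_op Hi), !(homB (gs G)).
    apply (G2 (gM G)); try apply (agree_s G Hi); try apply (stab_s G Hi); assumption.
Qed.

Lemma dec S (A B : alg S) (Et : split_ext A B) (G : good Et) m :
  exists a, m = add (se_i Et a) (se_s Et (se_p Et m)).
Proof.
  destruct (gker G (m:=add m (opp (se_s Et (se_p Et m))))) as [a Ea].
  - rewrite (homD (gp G)), (homN (gp G)), (gps G), (L_Nr (gB G)). reflexivity.
  - exists a. rewrite Ea, (addKN (gM G)). reflexivity.
Qed.

Definition T S (A B : alg S) (Et : split_ext A B) (m : car (se_mid Et)) (b1 b : car B) :=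
  add (add m (opp (se_s Et b1))) (se_s Et b).
Arguments T {S A B} Et m b1 b.

Lemma NF_T S (A B : alg S) (Et : split_ext A B) (G : good Et) a b1 b :
  T Et (add (se_i Et a) (se_s Et b1)) b1 b = add (se_i Et a) (se_s Et b).
Proof. unfold T. rewrite (addNK (gM G)). reflexivity. Qed.

Lemma NF_add S (A B : alg S) (Et : split_ext A B) (G : good Et) dot op (Hi : induces Et dot op) a b a' b' :
  add (add (se_i Et a) (se_s Et b)) (add (se_i Et a') (se_s Et b'))
  = add (se_i Et (add a (dot b a'))) (se_s Et (add b b')).
Proof.
  rewrite (homD (gi G)), (L_dot Hi), (homD (gs G)). gn (gM G).
  rewrite (addKl (gM G)). reflexivity.
Qed.

Lemma NF_opp S (A B : alg S) (Et : split_ext A B) (G : good Et) dot op (Hi : induces Et dot op) a b :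
  opp (add (se_i Et a) (se_s Et b)) = add (se_i Et (dot (opp b) (opp a))) (se_s Et (opp b)).
Proof.
  rewrite (L_dot Hi), (homN (gs G)), (homN (gi G)), (oppK (gM G)), (oppD (gM G)). gn (gM G).
  rewrite (L_Nr (gM G)), (L_0r (gM G)). reflexivity.
Qed.

Lemma NF_un S (A B : alg S) (Et : split_ext A B) (G : good Et) w a b :
  un w (add (se_i Et a) (se_s Et b)) = add (se_i Et (un w a)) (se_s Et (un w b)).
Proof. rewrite (L_und (gM G)), (homU (gi G)), (homU (gs G)). reflexivity. Qed.

Lemma NF_bin S (A B : alg S) (Et : split_ext A B) (G : good Et) dot op (Hi : induces Et dot op) o a b a' b' :
  bin o (add (se_i Et a) (se_s Et b)) (add (se_i Et a') (se_s Et b'))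
  = add (se_i Et (add (add (bin o a a') (op (circ o) b' a)) (op o b a'))) (se_s Et (bin o b b')).
Proof.
  rewrite (binDl (gM G)), !(L_distr (gM G)), !(homD (gi G)), (homB (gi G)), (homB (gs G)),
    (i_bin_s G Hi o b' a), <- (L_op Hi o b a'). gn (gM G). reflexivity.
Qed.


Lemma morH S (A B C : alg S) (Et : split_ext A B) (G : good Et) dot op (Hi : induces Et dot op)
  (X : split_ext A C) (GX : good X) g g' (Hm : split_ext_mor X Et g g')
  (psi : car C -> car B) (Hpsi : is_hom psi)
  (Hag : forall c, act_eq dot op (g' c) (psi c)) :
  split_ext_mor X Et (fun n => T Et (g n) (g' (se_p X n)) (psi (se_p X n))) psi.
Proof.
  destruct Hm as [Hg [Hg' [Hgi [Hgp Hgs]]]].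
  assert (decg : forall n, exists a, g n = add (se_i Et a) (se_s Et (g' (se_p X n)))).
  { intro n. destruct (dec G (g n)) as [a Ea]. exists a. rewrite <- Hgp. exact Ea. }
  split; [|split; [exact Hpsi|split; [|split]]].
  - split; [|split; [|split; [|split]]].
    + rewrite (hom0 (gp GX)), (hom0 Hg), (hom0 Hg'), (hom0 Hpsi). unfold T.
      rewrite (hom0 (gs G)), (opp0 (gM G)), !(L_0r (gM G)). reflexivity.
    + intros n n'. rewrite (homD (gp GX)), (homD Hg), (homD Hg'), (homD Hpsi).
      destruct (decg n) as [a Ea], (decg n') as [a' Ea']. rewrite Ea, Ea'.
      rewrite (NF_add G Hi), !(NF_T G), (NF_add G Hi), (proj1 (Hag _)). reflexivity.
    + intros n. rewrite (homN (gp GX)), (homN Hg), (homN Hg'), (homN Hpsi).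
      destruct (decg n) as [a Ea]. rewrite Ea.
      rewrite (NF_opp G Hi), !(NF_T G), (NF_opp G Hi).
      rewrite (proj1 (AE_opp G Hi (Hag (se_p X n)))). reflexivity.
    + intros w n. rewrite (homU (gp GX)), (homU Hg), (homU Hg'), (homU Hpsi).
      destruct (decg n) as [a Ea]. rewrite Ea.
      rewrite (NF_un G), !(NF_T G), (NF_un G). reflexivity.
    + intros o n n'. rewrite (homB (gp GX)), (homB Hg), (homB Hg'), (homB Hpsi).
      destruct (decg n) as [a Ea], (decg n') as [a' Ea']. rewrite Ea, Ea'.
      rewrite (NF_bin G Hi), !(NF_T G), (NF_bin G Hi).
      rewrite (proj2 (Hag (se_p X n))), (proj2 (Hag (se_p X n'))). reflexivity.
  - intros a. rewrite (gpi GX), (hom0 Hg'), (hom0 Hpsi), Hgi. unfold T.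
    rewrite (hom0 (gs G)), (opp0 (gM G)), !(L_0r (gM G)). reflexivity.
  - intros n. unfold T. rewrite !(homD (gp G)), (homN (gp G)), !(gps G), Hgp,
      (L_Nr (gB G)), (L_0l (gB G)). reflexivity.
  - intros c. rewrite (gps GX), Hgs. unfold T. rewrite (L_Nr (gM G)), (L_0l (gM G)). reflexivity.
Qed.

Lemma term_uniq S (E : identity S -> Prop) (A B C : alg S) (Et : split_ext A B)
  (Ht : terminal_split_ext E Et) (X : split_ext A C) (HX : is_split_ext E X)
  h1 h1' h2 h2' : split_ext_mor X Et h1 h1' -> split_ext_mor X Et h2 h2' -> forall c, h1' c = h2' c.
Proof.
  intros M1 M2 c. destruct Ht as [_ Ht]. destruct (Ht C X HX) as [g [g' [_ U]]].
  rewrite (proj2 (U _ _ M1)), (proj2 (U _ _ M2)). reflexivity.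
Qed.


Definition uapp S (X : alg S) (u : list (O1 S)) (x : car X) : car X :=
  fold_right (fun w y => un w y) x u.

Lemma uapp_add S (X : alg S) (H : laws X) u (x y : car X) : uapp u (add x y) = add (uapp u x) (uapp u y).
Proof. induction u; cbn; [reflexivity|]. unfold uapp in IHu. rewrite IHu, (L_und H). reflexivity. Qed.
Lemma uapp_opp S (X : alg S) (H : laws X) u (x : car X) : uapp u (opp x) = opp (uapp u x).
Proof. induction u; cbn; [reflexivity|]. unfold uapp in IHu. rewrite IHu, (unN H). reflexivity. Qed.
Lemma uapp_bin S (X : alg S) (H : laws X) u o (x y : car X) : uapp u (bin o x y) = bin o (uapp u x) y.
Proof. induction u; cbn; [reflexivity|]. unfold uapp in IHu. rewrite IHu, (L_unbin H). reflexivity. Qed.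
Lemma uapp_un S (X : alg S) u w (x : car X) : uapp u (un w x) = uapp (u ++ (w :: nil)) x.
Proof. unfold uapp. rewrite fold_right_app. reflexivity. Qed.
Lemma uapp_hom S (X Y : alg S) (f : car X -> car Y) (Hf : is_hom f) u x : f (uapp u x) = uapp u (f x).
Proof. induction u; cbn; [reflexivity|]. unfold uapp in IHu. rewrite (homU Hf), IHu. reflexivity. Qed.

Definition Rel S (A B : alg S) (dot : car B -> car A -> car A) (op : O2 S -> car B -> car A -> car A)
  (b b' : car B) : Prop := forall u, act_eq dot op (uapp u b) (uapp u b').

Lemma closedD S (A B : alg S) (Et : split_ext A B) (G : good Et) dot op (Hi : induces Et dot op) :
  closed (X := prod_alg B B) (fun q => Rel dot op (fst q) (snd q)).
Proof.
  constructor.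
  - intros u. apply AE_refl.
  - intros [x1 x2] [y1 y2] H1 H2 u; cbn in *. rewrite !(uapp_add (gB G)). apply (AE_add G Hi); auto.
  - intros [x1 x2] H1 u; cbn in *. rewrite !(uapp_opp (gB G)). apply (AE_opp G Hi); auto.
  - intros w [x1 x2] H1 u; cbn in *. rewrite !uapp_un. apply H1.
  - intros o [x1 x2] [y1 y2] H1 H2 u; cbn in *. rewrite !(uapp_bin (gB G)). apply (AE_bin G Hi); auto.
    apply (H2 nil).
Qed.

Lemma closedN S (A B : alg S) (Et : split_ext A B) (G : good Et) (D : alg S) (f : car D -> car B)
  (Hf : is_hom f) :
  closed (X := prod_alg (se_mid Et) D) (fun q => se_p Et (fst q) = f (snd q)).
Proof.
  constructor.
  - cbn. rewrite (hom0 (gp G)), (hom0 Hf). reflexivity.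
  - intros [x1 x2] [y1 y2] H1 H2; cbn in *. rewrite (homD (gp G)), (homD Hf), H1, H2. reflexivity.
  - intros [x1 x2] H1; cbn in *. rewrite (homN (gp G)), (homN Hf), H1. reflexivity.
  - intros w [x1 x2] H1; cbn in *. rewrite (homU (gp G)), (homU Hf), H1. reflexivity.
  - intros o [x1 x2] [y1 y2] H1 H2; cbn in *. rewrite (homB (gp G)), (homB Hf), H1, H2. reflexivity.
Qed.

Lemma faithful S (E : identity S -> Prop) (HC : cat_of_interest E) (A B : alg S) (Et : split_ext A B)
  (Ht : terminal_split_ext E Et) dot op (Hi : induces Et dot op) b b' :
  Rel dot op b b' -> b = b'.
Proof.
  intros HR.
  pose proof (proj1 Ht) as HEt. pose proof (good_of HC HEt) as G.
  destruct HEt as [HA [HM [HB _]]].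
  set (D := sub_alg (closedD G Hi)).
  set (f1 := fun d : car D => fst (proj1_sig d)).
  set (f2 := fun d : car D => snd (proj1_sig d)).
  assert (Hf1 : is_hom f1) by (repeat split).
  assert (Hf2 : is_hom f2) by (repeat split).
  set (N := sub_alg (closedN G Hf1)).
  set (X := {| se_mid := N;
               se_i := fun a => exist _ (se_i Et a, zero D) (gpi G a) : car N;
               se_p := fun n : car N => snd (proj1_sig n);
               se_s := fun d => exist _ (se_s Et (f1 d), d) (gps G (f1 d)) : car N |} : split_ext A D).
  assert (HD : in_var E D) by (apply in_var_sub, in_var_prod; assumption).
  assert (HX : is_split_ext E X).
  { split; [exact HA|split; [|split; [exact HD|split; [|split; [|split; [|split; [|split; [|split]]]]]]]].
    - apply in_var_sub, in_var_prod; assumption.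
    - split; [|split; [|split; [|split]]]; intros; apply sig_eq; cbn; f_equal;
        try (apply sig_eq; cbn; f_equal); 
        first [ apply (hom0 (gi G)) | apply (homD (gi G)) | apply (homN (gi G))
              | apply (homU (gi G)) | apply (homB (gi G))
              | symmetry; apply (L_0l (gB G)) | symmetry; apply (opp0 (gB G))
              | symmetry; apply (un0 (gB G)) | symmetry; apply (bin0l (gB G)) | idtac ].
    - repeat split.
    - split; [|split; [|split; [|split]]]; intros; apply sig_eq; cbn; f_equal;
        first [ apply (hom0 (gs G)) | apply (homD (gs G)) | apply (homN (gs G))
              | apply (homU (gs G)) | apply (homB (gs G)) ].
    - intros a a' Ea. apply (f_equal (fun n : car N => fst (proj1_sig n))) in Ea. cbn in Ea.
      apply (ginj G); exact Ea.
    - intros n. split.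
      + intros Hn. destruct n as [[m d] Hmd]. cbn in Hn, Hmd. subst d.
        destruct (gker G (m:=m)) as [a Ea]. { rewrite Hmd. reflexivity. }
        exists a. apply sig_eq. cbn. rewrite Ea. reflexivity.
      + intros [a Ea]. subst n. reflexivity.
    - intros d. exists (se_s X d). reflexivity.
    - intros d. reflexivity. }
  assert (M1 : split_ext_mor X Et (fun n : car N => fst (proj1_sig n)) f1).
  { split; [repeat split|split; [exact Hf1|split; [|split]]].
    - intros a. reflexivity.
    - intros n. exact (proj2_sig n).
    - intros d. reflexivity. }
  assert (Hag : forall d, act_eq dot op (f1 d) (f2 d)).
  { intros d. exact (proj2_sig d nil). }
  pose proof (morH G Hi (X := X) (good_of HC HX) M1 Hf2 Hag) as M2.
  pose proof (term_uniq Ht HX M1 M2 (exist _ (b, b') HR)) as Eq.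
  exact Eq.
Qed.


Lemma uapp_dot S (A B : alg S) (Et : split_ext A B) (G : good Et) dot op (Hi : induces Et dot op) u b a :
  uapp u (dot b a) = dot (uapp u b) (uapp u a).
Proof. induction u; cbn; [reflexivity|]. unfold uapp in IHu. rewrite IHu, (dot_un G Hi). reflexivity. Qed.

Lemma uapp_op S (A B : alg S) (Et : split_ext A B) (G : good Et) dot op (Hi : induces Et dot op) u o b a :
  uapp u (op o b a) = op o (uapp u b) a.
Proof. induction u; cbn; [reflexivity|]. unfold uapp in IHu. rewrite IHu, (op_un G Hi). reflexivity. Qed.

Lemma dot_addA S (A B : alg S) (Et : split_ext A B) (G : good Et) dot op (Hi : induces Et dot op) b a a' :
  dot b (add a a') = add (dot b a) (dot b a').
Proof.
  apply (ginj G). rewrite (homD (gi G)), !(L_dot Hi), (homD (gi G)). gn (gM G).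
  rewrite (addKl (gM G)). reflexivity.
Qed.

Lemma dot_oppA S (A B : alg S) (Et : split_ext A B) (G : good Et) dot op (Hi : induces Et dot op) b a :
  dot b (opp a) = opp (dot b a).
Proof.
  apply (opp_uniq (gA G)). rewrite <- (dot_addA G Hi), (L_Nr (gA G)).
  apply (ginj G). rewrite (L_dot Hi), (hom0 (gi G)), (L_0r (gM G)), (L_Nr (gM G)). reflexivity.
Qed.


Theorem proposition3p8 (S : Sig) (E : identity S -> Prop)
  (HC : cat_of_interest E) (A : alg S) (HA : in_var E A)
  (B : alg S) (Et : split_ext A B) (Hterm : terminal_split_ext E Et)
  (gamma : car (se_mid (EA A)) -> car (se_mid Et)) (beta : car A -> car B)
  (Hmor : split_ext_mor (EA A) Et gamma beta)
  (dot : car B -> car A -> car A) (op : O2 S -> car B -> car A -> car A)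
  (Hind : induces Et dot op) :
  crossed_module E beta dot op /\ is_actor E beta dot op.
Proof.
  pose proof (proj1 Hterm) as HEt. pose proof (good_of HC HEt) as G.
  pose proof (gA G) as LA.
  destruct Hmor as [Hgam [Hbeta [Hgi [_ Hgs]]]].
  assert (dotB : forall a x, dot (beta a) x = add (add a x) (opp a)).
  { intros a x. apply (ginj G). rewrite (L_dot Hind), <- (Hgs a), <- (Hgi x), <- (homN Hgam),
      <- !(homD Hgam), <- (Hgi (add (add a x) (opp a))). f_equal. cbn. unfold conj_dot.
    repeat rewrite ?(opp0 LA), ?(L_0r LA), ?(L_0l LA), ?(oppK LA), ?(L_Nl LA), ?(L_Nr LA).
    reflexivity. }
  assert (opB : forall o a x, op o (beta a) x = bin o a x).
  { intros o a x. apply (ginj G). rewrite (L_op Hind), <- (Hgs a), <- (Hgi x), <- (homB Hgam),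
      <- (Hgi (bin o a x)). f_equal. cbn. unfold conj_op.
    rewrite (bin0r LA), (bin0l LA), (bin0l LA), !(L_0l LA). reflexivity. }
  assert (HB : in_var E B) by apply HEt.
  assert (C4 : forall o r c, beta (op o r c) = bin o r (beta c)).
  { intros o r c. apply (faithful HC Hterm Hind). intros u.
    rewrite <- (uapp_hom Hbeta), (uapp_op G Hind), (uapp_bin (gB G)).
    generalize (uapp u r). clear u r. intros r. split.
    + intros x. rewrite (dot_bin G Hind). apply (ginj G).
      rewrite dotB, (homD (gi G)), (homD (gi G)), (homN (gi G)), (L_op Hind),
        <- (L_central (gM G)), (addNK (gM G)). reflexivity.
    + intros o' x. rewrite opB. apply (ginj G).
      rewrite (homB (gi G)), !(L_op Hind), (homB (gs G)).
      apply (G2 (gM G)).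
      * intros p a. split; reflexivity.
      * intros p a. rewrite <- (L_op Hind), (i_bin_s G Hind), !opB, (L_circ LA), !(homB (gi G)).
        split; reflexivity.
      * apply (stab_s G Hind).
      * apply (stab_s G Hind). }
  assert (CM : crossed_module E beta dot op).
  { split; [exact HA|split; [exact HB|split; [exact Hbeta|split; [|split; [|split; [|split; [|split]]]]]]].
    - exists Et. split; assumption.
    - intros r c. apply (faithful HC Hterm Hind). intros u.
      rewrite <- (uapp_hom Hbeta), (uapp_dot G Hind), (uapp_add (gB G)), (uapp_add (gB G)),
        (uapp_opp (gB G)), <- (uapp_hom Hbeta).
      generalize (uapp u r) (uapp u c). clear u r c. intros r c. split.
      + intros x. rewrite (dotB), !(dot_add G Hind), (dotB), (dot_addA G Hind), (dot_addA G Hind),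
          (dot_oppA G Hind), (proj1 (dot_inv G Hind r x)). gn LA. reflexivity.
      + intros o x. rewrite (opB), !(op_add G Hind), (op_opp G Hind), (opB), (conj_central LA).
        apply (ginj G). rewrite !(homB (gi G)), (L_dot Hind), !(binDl (gM G)), (binNl (gM G)),
          (conj_central (gM G)). reflexivity.
    - exact dotB.
    - exact opB.
    - exact C4.
    - intros o r c. rewrite C4, (L_circ (gB G)). reflexivity. }
  split; [exact CM|split; [exact CM|]].
  intros C HCv dotC opC [X [HX HiX]].
  pose proof (good_of HC HX) as GX.
  destruct (proj2 Hterm C X HX) as [g [g' [Hm U]]].
  pose proof Hm as [Hg [Hg' [Hmi [Hmp Hms]]]].
  assert (Ed : forall c a, dotC c a = dot (g' c) a).
  { intros c a. apply (ginj G). rewrite <- Hmi, (L_dot HiX), (homD Hg), (homD Hg), (homN Hg), Hms, Hmi,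
      (L_dot Hind). reflexivity. }
  assert (Eo : forall o c a, opC o c a = op o (g' c) a).
  { intros o c a. apply (ginj G). rewrite <- Hmi, (L_op HiX), (homB Hg), Hms, Hmi, (L_op Hind).
    reflexivity. }
  exists g'. split; [split; [exact Hg'|split; assumption]|].
  intros psi [Hpsi [Hd Ho]] c.
  assert (Hag : forall c, act_eq dot op (g' c) (psi c)).
  { intros c'. split; intros; rewrite <- ?Ed, <- ?Eo, ?Hd, ?Ho; reflexivity. }
  pose proof (morH G Hind GX Hm Hpsi Hag) as M2.
  symmetry. apply (term_uniq Hterm HX Hm M2).
Qed.
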